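(* Let $m\ge 2$ and $G=CK(2m-1)$. Every blocker for the simple Hamiltonian paths of $G$ contains at least two boundary edges.
   Context: $CK(2m-1)$ is the complete convex geometric graph on $2m-1$ points in convex position (vertices of a convex polygon $P$), labelled cyclically $0,\dots,2m-2$, with all segments between vertices as edges; boundary edges are the edges $[i,i+1]$ (mod $2m-1$) of $P$. A simple Hamiltonian path (SHP) is a path through all vertices whose edges pairwise do not cross. A blocker for SHPs is a set of edges of smallest possible size having an edge in common with every SHP. *)

(* Defs.v *)
From mathcomp Require Import all_boot.
Set Implicit Arguments. Unset Strict Implicit. Unset Printing Implicit Defensive.

(* CK(n): vertices 'I_n, points in convex position labelled cyclically 0..n-1.
   An edge (segment) is a 2-element vertex set. *)
Section CK.
Variable n : nat.

Definition is_edge (e : {set 'I_n}) : bool := #|e| == 2.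

(* Two segments of points in convex position cross iff their four endpoints
   are distinct and interleave in the cyclic order: with a < b the endpoints
   of e, exactly one endpoint of f lies strictly between a and b. *)
Definition cross (e f : {set 'I_n}) : bool :=
  [exists a : 'I_n, exists b : 'I_n, exists c : 'I_n, exists d : 'I_n,
    [&& e == [set a; b], f == [set c; d], (a < c < b)%N & (d < a)%N || (b < d)%N]].

Definition path_edges (p : seq 'I_n) : seq {set 'I_n} :=
  [seq [set x.1; x.2] | x <- zip p (behead p)].

Definition simple_ham_path (p : seq 'I_n) : bool :=
  [&& size p == n, uniq p &
      all (fun e => all (fun f => ~~ cross e f) (path_edges p)) (path_edges p)].

Definition blocks (B : {set {set 'I_n}}) : Prop :=
  (forall e, e \in B -> is_edge e) /\
  (forall p, simple_ham_path p -> has (fun e => e \in B) (path_edges p)).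

Definition blocker (B : {set {set 'I_n}}) : Prop :=
  blocks B /\ (forall B', blocks B' -> #|B| <= #|B'|).

Definition boundary_edge (e : {set 'I_n}) : bool :=
  [exists i : 'I_n, exists j : 'I_n, (e == [set i; j]) && (val j == i.+1 %% n)].

End CK.

(* Main.v *)
Require Import Defs.
From mathcomp Require Import all_boot.
From mathcomp Require Import zify.

Lemma zip_iota (T : Type) (f : nat -> T) a s :
  zip (map f (iota a s.+1)) (behead (map f (iota a s.+1))) =
  map (fun k => (f k, f k.+1)) (iota a s).
Proof.
elim: s a => [|s IH] a //=.
by rewrite -IH.
Qed.

Lemma bnd_nocross n (e f : {set 'I_n}) : boundary_edge e -> ~~ cross e f.
Proof.
move=> /existsP [i /existsP [j /andP [/eqP -> /eqP hj]]].
apply/negP => /existsP [a /existsP [b /existsP [c /existsP [d /and4P [/eqP hab _ /andP [hac hcb] hd]]]]].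
have ha : a \in [set i; j] by rewrite hab !inE eqxx.
have hb : b \in [set i; j] by rewrite hab !inE eqxx orbT.
have hdn := ltn_ord d. have hin := ltn_ord i.
have hj' : ((j:nat) = i.+1 /\ i.+1 < n) \/ ((j:nat) = 0 /\ i.+1 = n).
  case: (ltngtP i.+1 n) => h.
  - by left; rewrite hj modn_small.
  - lia.
  - by right; rewrite hj h modnn.
rewrite !inE in ha hb.
case/orP: ha => /eqP ha; case/orP: hb => /eqP hb; subst a b;
  clear hj hab; case/orP: hd => hd; lia.
Qed.

Lemma main_gen n (B : {set {set 'I_n}}) : 3 <= n -> blocks B ->
  2 <= #|[set e in B | boundary_edge e]|.
Proof.
move=> hn [_ hB]. rewrite leqNgt; apply/negP => hS.
have n0 : 0 < n by apply: leq_trans hn.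
have [i [j [hj hBi]]] : exists i j : 'I_n, val j = i.+1 %% n /\
    forall e, e \in B -> boundary_edge e -> e = [set i; j].
{ case: (set_0Vmem [set e in B | boundary_edge e]) => [S0 | [e he]].
  - exists (Ordinal n0), (Ordinal (ltn_pmod 1 n0)); split => // e eB be.
    have : e \in (set0 : {set {set 'I_n}}) by rewrite -S0 inE eB.
    by rewrite inE.
  - have S1 : [set e in B | boundary_edge e] = [set e].
      apply/eqP; rewrite eq_sym eqEcard sub1set he cards1 /=.
      by rewrite -ltnS.
    move: he; rewrite inE => /andP [eB /existsP [i /existsP [j /andP [/eqP ee /eqP hj]]]].
    exists i, j; split => // e' e'B be'.
    have : e' \in [set e] by rewrite -S1 inE e'B be'.
    by rewrite inE => /eqP ->. }
pose W k : 'I_n := Ordinal (ltn_pmod (j + k) n0).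
pose p := map W (iota 0 n).
have Winj : forall k k', k < n -> k' < n -> W k = W k' -> k = k'.
  move=> k k' hk hk' /(congr1 val) /= /eqP.
  by rewrite eqn_modDl !modn_small // => /eqP.
have Wn1 : W n.-1 = i.
  apply: val_inj => /=. rewrite hj modnDml addSnnS prednK // modnDr modn_small //.
have W0 : W 0 = j.
  apply: val_inj => /=. by rewrite addn0 modn_small.
have WS : forall k, val (W k.+1) = (val (W k)).+1 %% n.
  move=> k /=. by rewrite -[in RHS]addn1 modnDml addn1 addnS.
have Wn : W n = j.
  apply: val_inj => /=. by rewrite modnDr modn_small.
have ep : path_edges p = [seq [set W k; W k.+1] | k <- iota 0 n.-1].
  rewrite /path_edges /p.
  have -> : iota 0 n = iota 0 (n.-1).+1 by rewrite prednK.
  by rewrite zip_iota -map_comp.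
have bd : forall e, e \in path_edges p -> boundary_edge e.
  move=> e; rewrite ep => /mapP [k _ ->].
  apply/existsP; exists (W k); apply/existsP; exists (W k.+1).
  by rewrite eqxx /=; apply/eqP; exact: (WS k).
have shp : simple_ham_path p.
  apply/and3P; split.
  - by rewrite /p size_map size_iota.
  - rewrite /p map_inj_in_uniq ?iota_uniq //.
    move=> k k'; rewrite !mem_iota /= !add0n; exact: Winj.
  - apply/allP => e he; apply/allP => f _; exact: bnd_nocross (bd e he).
have /hasP [e he eB] := hB p shp.
have E := hBi e eB (bd e he).
move: he; rewrite ep => /mapP [k]; rewrite mem_iota add0n /= => hk Ek.
have h1 : W n.-1 \in e by rewrite E Wn1 !inE eqxx.
have h2 : W 0 \in e by rewrite E W0 !inE eqxx orbT.
rewrite Ek !inE in h1 h2.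
have hkn : k.+1 < n by rewrite -(prednK n0) ltnS.
clear hj hBi E Ek hS hB; case/orP: h1 => /eqP /Winj h1; case/orP: h2 => /eqP /Winj h2; lia.
Qed.

Theorem mainTheorem4 (m : nat) (hm : 2 <= m) (B : {set {set 'I_(2 * m - 1)}}) :
  blocker B -> 2 <= #|[set e in B | boundary_edge e]|.
Proof.
move=> [hB _]. apply: main_gen hB. lia.
Qed.
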